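(* Consider $N$ players $\mathcal{N}=\{1,\dots,N\}$. Player $i$ has decision variable $x_i\in\mathcal{X}_i\subset\mathbb{R}^{m_i}$, $m:=\sum_i m_i$, $\mathcal{X}:=\prod_i\mathcal{X}_i$, and differentiable objective $J_i:\mathbb{R}^m\to\mathbb{R}$. For each ordered pair $i\neq j$ let $\Theta_{i,j}\subseteq\mathbb{R}^d$, $\Theta:=\prod_{i\neq j}\Theta_{i,j}$, and let $\gamma_i^j:\mathcal{X}_i\times\Theta_{i,j}\to\mathcal{X}_j$ be differentiable in $x_i$; write $\theta_i=(\theta_{i,j})_{j\neq i}$, $\gamma_i^{-i}(x_i;\theta_i)=(\gamma_i^j(x_i;\theta_{i,j}))_{j\neq i}$. Let $\mathscr{F}:\mathcal{X}\to\mathbb{R}$, and let $(x^*,\theta^* )$ be a solution of $$\min_{\theta\in\Theta,\,x\in\mathcal{X}}\ \mathscr{F}(x)\quad\text{s.t.}\quad \nabla_i J_i(x_i,\gamma_i^{-i}(x_i;\theta_i))+\nabla_{-i}J_i(x_i,\gamma_i^{-i}(x_i;\theta_i))^\top\nabla_i\gamma_i^{-i}(x_i;\theta_i)=0\ \forall i,\qquad \gamma_i^j(x_i;\theta_{i,j})=x_j\ \forall i\neq j.$$ Assume that for each player $i$, the conjectured objective $x_i\mapsto J_i(x_i,\gamma_i^{-i}(x_i;\theta_i^* ))$ is pseudo-convex on $\mathcal{X}_i$. Then $x^*$ is an equilibrium of the game in which each player $i$ independently solves $\min_{x_i}J_i(x_i,\gamma_i^{-i}(x_i;\theta_i^* ))$;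 that is, for every $i$, $x_i^*$ is a global minimizer of $x_i\mapsto J_i(x_i,\gamma_i^{-i}(x_i;\theta_i^* ))$, so the equilibrium $x^N(\theta^* )$ of this game coincides with $x^*$.
   Context: A differentiable function $f:\mathcal{Y}\subseteq\mathbb{R}^k\to\mathbb{R}$ is pseudo-convex if for all $a,b\in\mathcal{Y}$, $\nabla f(a)^\top(b-a)\ge 0$ implies $f(b)\ge f(a)$. $\nabla_i$ denotes the partial derivative with respect to $x_i$, and $\nabla_{-i}J_i$ the stack of partial derivatives of $J_i$ with respect to $x_j$, $j\neq i$. *)

(* Defs.v *)
From HB Require Import structures.
From mathcomp Require Import all_boot all_order all_algebra.
From mathcomp Require Import all_classical all_reals.
From mathcomp Require Import topology normedtype derive.
Unset Printing Implicit Defensive.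
Import Order.TTheory GRing.Theory Num.Theory.
Import numFieldNormedType.Exports.
Local Open Scope classical_set_scope.
Local Open Scope ring_scope.

(* A joint profile x in R^m, m = sum_i m_i, is a row vector of size
   \sum_(j < N) m j; player j's block is x_j := blk x j. *)
Definition blk {R : realType} {N : nat} {m : 'I_N -> nat}
  (x : 'rV[R]_(\sum_(j < N) m j)) (j : 'I_N) : 'rV[R]_(m j) := submxrow x j.

Definition upd {R : realType} {N : nat} {m : 'I_N -> nat}
  (x : 'rV[R]_(\sum_(j < N) m j)) (i : 'I_N) (v : 'rV[R]_(m i))
  : 'rV[R]_(\sum_(j < N) m j) :=
  \mxrow_(j < N) (match i =P j with
                  | ReflectT e => ecast k 'rV[R]_(m k) e v
                  | ReflectF _ => blk x j end).

Definition emb {R : realType} {N : nat} {m : 'I_N -> nat}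
  (i : 'I_N) (v : 'rV[R]_(m i)) : 'rV[R]_(\sum_(j < N) m j) := upd 0 i v.

(* Partial derivative of f w.r.t. block j at x, applied to a direction v:
   nabla_j f(x)^T v. *)
Definition pd {R : realType} {N : nat} {m : 'I_N -> nat}
  (f : 'rV[R]_(\sum_(j < N) m j) -> R) (x : 'rV[R]_(\sum_(j < N) m j))
  (j : 'I_N) (v : 'rV[R]_(m j)) : R := 'd f x (emb j v).

Definition prof {R : realType} {N : nat} {m : 'I_N -> nat} {d : nat}
  (gam : forall i j : 'I_N, 'rV[R]_(m i) -> 'rV[R]_d -> 'rV[R]_(m j))
  (th : 'I_N -> 'I_N -> 'rV[R]_d) (i : 'I_N) (xi : 'rV[R]_(m i))
  : 'rV[R]_(\sum_(j < N) m j) :=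
  \mxrow_(j < N) (match i =P j with
                  | ReflectT e => ecast k 'rV[R]_(m k) e xi
                  | ReflectF _ => gam i j xi (th i j) end).

Definition pseudo_convex {R : realType} {k : nat} (Y : set 'rV[R]_k)
  (f : 'rV[R]_k -> R) : Prop :=
  (forall a, Y a -> differentiable f a) /\
  (forall a b, Y a -> Y b -> 0 <= 'd f a (b - a) -> f a <= f b).

(* Stationarity constraint of player i:
   nabla_i J_i + (nabla_{-i} J_i)^T nabla_i gamma_i^{-i} = 0,
   tested against every direction v of R^{m_i}. *)
Definition stationary {R : realType} {N : nat} {m : 'I_N -> nat} {d : nat}
  (J : 'I_N -> 'rV[R]_(\sum_(j < N) m j) -> R)
  (gam : forall i j : 'I_N, 'rV[R]_(m i) -> 'rV[R]_d -> 'rV[R]_(m j))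
  (x : 'rV[R]_(\sum_(j < N) m j)) (th : 'I_N -> 'I_N -> 'rV[R]_d)
  (i : 'I_N) : Prop :=
  let p := prof gam th i (blk x i) in
  forall v : 'rV[R]_(m i),
    pd (J i) p i v
    + \sum_(j < N | j != i)
        pd (J i) p j ('d (fun y => gam i j y (th i j)) (blk x i) v) = 0.

Definition feasible {R : realType} {N : nat} {m : 'I_N -> nat} {d : nat}
  (X : forall i : 'I_N, set 'rV[R]_(m i))
  (Theta : 'I_N -> 'I_N -> set 'rV[R]_d)
  (J : 'I_N -> 'rV[R]_(\sum_(j < N) m j) -> R)
  (gam : forall i j : 'I_N, 'rV[R]_(m i) -> 'rV[R]_d -> 'rV[R]_(m j))
  (x : 'rV[R]_(\sum_(j < N) m j)) (th : 'I_N -> 'I_N -> 'rV[R]_d) : Prop :=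
  [/\ (forall i, X i (blk x i)),
      (forall i j, i != j -> Theta i j (th i j)),
      (forall i, stationary J gam x th i) &
      (forall i j, i != j -> gam i j (blk x i) (th i j) = blk x j)].

(* Main.v *)
Require Import Defs.
From HB Require Import structures.
From mathcomp Require Import all_boot all_order all_algebra.
From mathcomp Require Import all_classical all_reals.
From mathcomp Require Import topology normedtype derive.
Import Order.TTheory GRing.Theory Num.Theory.
Import numFieldNormedType.Exports.
Local Open Scope classical_set_scope.
Local Open Scope ring_scope.

Section S.
Variables (R : realType) (N : nat) (m : 'I_N -> nat).

Lemma emb_lin (j : 'I_N) : linear (@emb R N m j).
Proof.
move=> a u v; apply/matrixP => r k; rewrite /emb /upd /mxrow !mxE.
move: (tagnat.sig2 k); move: (tagnat.sig1 k) => j' l.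
case: (j =P j') => [e|ne]; first by subst j'; rewrite !mxE.
by rewrite /blk submxrow0 !mxE mulr0 addr0.
Qed.

Lemma emb_cont (j : 'I_N) : continuous (@emb R N m j).
Proof.
move=> u A /nbhs_ballP[e /= e0 eA].
apply/nbhs_ballP; exists e => //= v [_ uv]; apply: eA; split => // r k.
rewrite /emb /upd /mxrow !mxE.
move: (tagnat.sig2 k); move: (tagnat.sig1 k) => j' l.
case: (j =P j') => [e'|ne]; first by subst j'; exact: uv.
exact: ballxx.
Qed.

Lemma mxrow_emb (B : forall j : 'I_N, 'rV[R]_(m j)) :
  \mxrow_j B j = \sum_(j < N) @emb R N m j (B j).
Proof.
apply/mxrowP => j'; rewrite submxrow_sum mxrowK /emb /upd.
under eq_bigr => j _ do rewrite mxrowK.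
rewrite (bigD1 j') //=.
case: (j' =P j') => [e|//]; rewrite (eq_irrelevance e erefl) /=.
rewrite big1 ?addr0 // => j ne.
case: (j =P j') => [e'|_]; first by rewrite e' eqxx in ne.
by rewrite /blk submxrow0.
Qed.

Lemma diff_sumS (V W : normedModType R) (I : Type) (s : seq I)
  (f : I -> V -> W) (x : V) :
  (forall i, differentiable (f i) x) ->
  differentiable (fun y => \sum_(i <- s) f i y) x /\
  forall v, 'd (fun y => \sum_(i <- s) f i y) x v = \sum_(i <- s) 'd (f i) x v.
Proof.
move=> df; elim: s => [|a s [ds IH]].
  have -> : (fun y : V => \sum_(i <- [::]) f i y) = cst 0.
    by apply/funext => y; rewrite big_nil.
  split; first exact: differentiable_cst.
  by move=> v; rewrite diff_cst big_nil.
have -> : (fun y => \sum_(i <- a :: s) f i y) = f a + (fun y => \sum_(i <- s) f i y).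
  by apply/funext => y; rewrite big_cons.
split; first exact: differentiableD.
by move=> v; rewrite diffD // big_cons /= IH.
Qed.
End S.

Theorem theorem2 (R : realType) (N : nat) (m : 'I_N -> nat) (d : nat)
  (X : forall i : 'I_N, set 'rV[R]_(m i))
  (Theta : 'I_N -> 'I_N -> set 'rV[R]_d)
  (J : 'I_N -> 'rV[R]_(\sum_(j < N) m j) -> R)
  (gam : forall i j : 'I_N, 'rV[R]_(m i) -> 'rV[R]_d -> 'rV[R]_(m j))
  (F : 'rV[R]_(\sum_(j < N) m j) -> R)
  (xs : 'rV[R]_(\sum_(j < N) m j)) (ths : 'I_N -> 'I_N -> 'rV[R]_d) :
  (forall i x, differentiable (J i) x) ->
  (forall i j, i != j -> forall xi th, X i xi -> Theta i j th ->
     differentiable (fun y => gam i j y th) xi) ->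
  feasible X Theta J gam xs ths ->
  (forall x th, feasible X Theta J gam x th -> F xs <= F x) ->
  (forall i, pseudo_convex (X i) (fun y => J i (prof gam ths i y))) ->
  forall i (y : 'rV[R]_(m i)), X i y ->
    J i (prof gam ths i (blk xs i)) <= J i (prof gam ths i y).
Proof.
move=> dJ dgam [Xs Ths Sts Eqs] _ pc i y Xy.
have [_ pcv] := pc i.
apply: (pcv _ _ (Xs i) Xy).
set a := blk xs i; set w := y - a.
pose c j (z : 'rV[R]_(m i)) : 'rV[R]_(m j) :=
  match i =P j with
  | ReflectT e => ecast k 'rV[R]_(m k) e z
  | ReflectF _ => gam i j z (ths i j) end.
have Pdef : prof gam ths i = fun z => \sum_(j < N) emb j (c j z).
  by apply/funext => z; rewrite /prof mxrow_emb.
have ci : c i = id.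
  rewrite /c; case: (i =P i) => [e|//]; rewrite (eq_irrelevance e erefl).
  by apply/funext.
have cj : forall j, i != j -> c j = fun z => gam i j z (ths i j).
  move=> j ne; rewrite /c; case: (i =P j) => [e|//].
  by rewrite e eqxx in ne.
have dc : forall j, differentiable (c j) a.
  move=> j; have [<-|ne] := eqVneq i j.
    rewrite ci; apply: (@linear_differentiable _ _ _ idfun) => ? //.
  by rewrite cj //; apply: dgam => //; apply: Ths.
have de : forall j, differentiable (fun z => emb j (c j z)) a /\
   forall v, 'd (fun z => emb j (c j z)) a v = emb j ('d (c j) a v).
  move=> j.
  pose eL : {linear _ -> _} := HB.pack (@emb R N m j)
    (GRing.isLinear.Build _ _ _ _ _ (@emb_lin R N m j)).
  have ec : continuous eL := @emb_cont R N m j.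
  have dE : differentiable eL (c j a) := linear_differentiable _ ec.
  split; first exact: (differentiable_comp (dc j) dE).
  move=> v; have := diff_comp (dc j) dE.
  by rewrite (diff_lin _ ec) => ->.
have [dS dSE] := @diff_sumS R _ _ _ (enum 'I_N) (fun j z => emb j (c j z)) a (fun j => (de j).1).
rewrite Pdef.
have -> : (fun y0 => J i (\sum_(j < N) emb j (c j y0))) =
          J i \o (fun y0 => \sum_(j <- enum 'I_N) emb j (c j y0)).
  by apply/funext => z /=; rewrite big_enum.
rewrite (diff_comp dS (dJ i _)).
rewrite /= dSE linear_sum /=.
rewrite big_enum /=.
under eq_bigr => j _ do rewrite (de j).2.
rewrite (_ : \sum_(i1 <- enum 'I_N) emb i1 (c i1 a) = prof gam ths i a);
  last by rewrite Pdef big_enum.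
have dci : 'd (c i) a w = w.
  rewrite ci (diff_lin (f:=idfun)) // => ? //.
have cj' : forall j, j != i -> c j = fun z => gam i j z (ths i j).
  by move=> j ne; apply: cj; rewrite eq_sym.
rewrite (bigD1 i) //= dci.
rewrite [X in _ + X](eq_bigr (fun j => 'd (J i) (prof gam ths i a) (emb j ('d (fun z => gam i j z (ths i j)) a w)))); last first.
  by move=> j ne; rewrite (cj' j ne).
have H := Sts i w.
rewrite /pd -/a in H.
by rewrite H lexx.
Qed.
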